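(* Let $M_t, L, K$ be positive integers, let $1\le L'\le L$, let $\mathbf h_1,\dots,\mathbf h_L\in\mathbb C^{M_t}$, let $n_1,\dots,n_L$ be pairwise distinct nonnegative integers, let $\sigma>0$, and let $n'_{\rm span}$ be an integer with $0\le n'_{\rm span}<n_{\rm span}$. With $\kappa_{l'}$, $\bar{\mathbf H}_{l'}^{\perp}$, $\mathbf g_k$ and $\mathbf V_k$ defined as in the context, for every $k\in\{0,1,\dots,K-1\}$ we have $\mathbf g_k=\mathbf V_k\mathbf e_k$, where $$\mathbf e_k=\frac{1}{\sigma}\sum_{l=1}^{L}\mathbf h_l\, e^{j\frac{2\pi}{K}k\,(n_l-n_{\max}+n'_{\rm span})}\in\mathbb C^{M_t}.$$
   Context: Here $j$ is the imaginary unit and $(\cdot)^H$ denotes conjugate transpose. Set $n_{\max}=\max_{1\le l\le L}n_l$ and $n_{\rm span}=n_{\max}-\min_{1\le l\le L}n_l$. For $l'=1,\dots,L'$ define the delay pre-compensation $\kappa_{l'}=n_{\max}-n_{L-L'+l'}$. For each $l'$ define the index sets $\mathcal L_{l'}=\{1\le l\le L:\ n_l+\kappa_{l'}\notin[n_{\max}-n'_{\rm span},\,n_{\max}]\}$ and $\bar{\mathcal L}_{l'}=\{1,\dots,L\}\setminus\mathcal L_{l'}$. Let $\bar{\mathbf H}_{l'}\in\mathbb C^{M_t\times|\mathcal L_{l'}|}$ be the matrix whose columns are the $\mathbf h_l$ with $l\in\mathcal L_{l'}$, and let $\bar{\mathbf H}_{l'}^{\perp}\in\mathbb C^{M_t\times\bar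 r_{l'}}$ be a matrix whose columns form an orthonormal basis of the orthogonal complement (in $\mathbb C^{M_t}$) of the column space of $\bar{\mathbf H}_{l'}$ (if $\mathcal L_{l'}=\emptyset$ this complement is all of $\mathbb C^{M_t}$). For $t\in\{0,1,\dots,n'_{\rm span}\}$ define $\mathbf g_{l'}[t]=\mathbf h_l$ if there exists $l\in\bar{\mathcal L}_{l'}$ with $n_l+\kappa_{l'}=t+n_{\max}-n'_{\rm span}$ (such $l$ is unique since the delays are distinct), and $\mathbf g_{l'}[t]=\mathbf 0$ otherwise. For $k\in\{0,\dots,K-1\}$ define $\mathbf g_{kl'}=\frac1\sigma\sum_{t=0}^{n'_{\rm span}}\mathbf g_{l'}[t]e^{j\frac{2\pi}{K}kt}\in\mathbb C^{M_t}$, let $R=\sum_{l'=1}^{L'}\bar r_{l'}$, define the stacked vector $\mathbf g_k=\big[\mathbf g_{k1}^H\bar{\mathbf H}_1^{\perp},\dots,\mathbf g_{kL'}^H\bar{\mathbf H}_{L'}^{\perp}\big]^H\in\mathbb C^{R}$, and define $\mathbf V_k=\big[\bar{\mathbf H}_1^{\perp}e^{-j\frac{2\pi}{K}k\kappa_1},\dots,\bar{\mathbf H}_{L'}^{\perp}e^{-j\frac{2\pi}{K}k\kappa_{L'}}\big]^H\in\mathbb C^{R\times M_t}$. *)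

(* Defs.v *)
From HB Require Import structures.
From mathcomp Require Import all_boot all_order all_algebra.
From mathcomp Require Import complex.
From mathcomp Require Import reals trigo.
Set Implicit Arguments. Unset Strict Implicit. Unset Printing Implicit Defensive.
Import Order.TTheory GRing.Theory Num.Theory.
Local Open Scope ring_scope.

Section Defs.
Variable R : realType.

Definition expj (x : R) : R[i] := Complex (cos x) (sin x).

Definition ctr (m n : nat) (A : 'M[R[i]]_(m, n)) : 'M[R[i]]_(n, m) :=
  (map_mx Num.conj A)^T.

Variables (Mt L K L' : nat).
Variable h : 'I_L -> 'cV[R[i]]_Mt.
Variable n : 'I_L -> nat.
Variable sigma : R.
Variable nspan' : nat.

Definition n_max : nat := \max_(l < L) n l.
Definition n_min : nat := \big[minn/n_max]_(l < L) n l.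
Definition n_span : nat := n_max - n_min.

(* l' : 'I_L' is the 0-based version of l' in {1..L'}; the 1-based index
   L - L' + l' becomes the 0-based index L - L' + l'. *)
(* delay at a nat index (the index is always < L when L' <= L) *)
Definition n_at (i : nat) : nat :=
  match @insub _ (fun j => (j < L)%N) 'I_L i with Some l => n l | None => 0%N end.

Definition kappa (l' : 'I_L') : nat := n_max - n_at (L - L' + l').

Definition calL (l' : 'I_L') : pred 'I_L :=
  fun l => ~~ ((n_max - nspan' <= n l + kappa l')%N && (n l + kappa l' <= n_max)%N).

Definition calLbar (l' : 'I_L') : pred 'I_L := fun l => ~~ calL l' l.

(* P is a matrix whose columns form an orthonormal basis of the orthogonal
   complement of the column space of \bar H_{l'} = [h_l]_{l in calL l'}. *)
Definition orth_compl_basis (l' : 'I_L') (r : nat) (P : 'M[R[i]]_(Mt, r)) : Prop :=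
  ctr P *m P = 1%:M /\
  forall v : 'cV[R[i]]_Mt,
    (exists w : 'cV[R[i]]_r, v = P *m w) <->
    (forall l, calL l' l -> ctr (h l) *m v = 0).

Definition gt (l' : 'I_L') (t : nat) : 'cV[R[i]]_Mt :=
  match [pick l | calLbar l' l && (n l + kappa l' == t + (n_max - nspan'))%N] with
  | Some l => h l
  | None => 0
  end.

Definition theta (k : nat) : R := (2 * pi / K%:R) * k%:R.

Definition gkl (k : nat) (l' : 'I_L') : 'cV[R[i]]_Mt :=
  (sigma^-1)%:C%C *: \sum_(t < nspan'.+1) (expj (theta k * t%:R) *: gt l' t).

Definition ek (k : nat) : 'cV[R[i]]_Mt :=
  (sigma^-1)%:C%C *: \sum_(l < L)
     (expj (theta k * ((n l)%:R - n_max%:R + nspan'%:R)) *: h l).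

Variable r : 'I_L' -> nat.
Variable P : forall l' : 'I_L', 'M[R[i]]_(Mt, r l').

Definition gk (k : nat) : 'cV[R[i]]_(\sum_(l' < L') r l') :=
  \mxcol_(l' < L') ctr (ctr (gkl k l') *m P l').

Definition Vk (k : nat) : 'M[R[i]]_(\sum_(l' < L') r l', Mt) :=
  \mxcol_(l' < L') ctr (expj (- (theta k * (kappa l')%:R)) *: P l').

End Defs.

(* Main.v *)
Require Import Defs.
From HB Require Import structures.
From mathcomp Require Import all_boot all_order all_algebra.
From mathcomp Require Import complex.
From mathcomp Require Import reals trigo.
From mathcomp Require Import ring lra zify.
Import Order.TTheory GRing.Theory Num.Theory.
Local Open Scope ring_scope.
Section S. Variable R : realType.
Lemma expjD (a b : R) : expj a * expj b = expj (a + b).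
Proof. rewrite /expj cosD sinD. apply/eqP; rewrite eq_complex /=. apply/andP; split; apply/eqP; ring. Qed.
Lemma expjC (a : R) : Num.conj (expj a) = expj (- a).
Proof. by rewrite /expj cosN sinN. Qed.
Lemma ctr_mul m n p (A : 'M[R[i]]_(m,n)) (B : 'M[R[i]]_(n,p)) : ctr (A *m B) = ctr B *m ctr A.
Proof. by rewrite /ctr map_mxM trmx_mul. Qed.
Lemma ctrK m n (A : 'M[R[i]]_(m,n)) : ctr (ctr A) = A.
Proof. rewrite /ctr map_trmx trmxK -map_mx_comp; apply: map_mx_id => x /=; exact: conjCK. Qed.
Lemma ctrZ m n a (A : 'M[R[i]]_(m,n)) : ctr (a *: A) = Num.conj a *: ctr A.
Proof. by rewrite /ctr map_mxZ linearZ. Qed.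
End S.

Theorem theorem2 (R : realType) (Mt L K L' : nat)
  (hMt : (0 < Mt)%N) (hL : (0 < L)%N) (hK : (0 < K)%N)
  (hL'1 : (1 <= L')%N) (hL'L : (L' <= L)%N)
  (h : 'I_L -> 'cV[R[i]]_Mt) (n : 'I_L -> nat) (hn : injective n)
  (sigma : R) (hsigma : 0 < sigma)
  (nspan' : nat) (hnspan' : (nspan' < n_span n)%N)
  (r : 'I_L' -> nat) (P : forall l' : 'I_L', 'M[R[i]]_(Mt, r l'))
  (hP : forall l' : 'I_L', orth_compl_basis h n nspan' l' (P l'))
  (k : 'I_K) :
  gk K h n sigma nspan' P k = Vk K n P k *m ek K h n sigma nspan' k.
Proof.
rewrite /gk /Vk mxcol_mul; apply/eq_mxcol => l'.
rewrite ctr_mul ctrK ctrZ expjC opprK -scalemxAl.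
rewrite /gkl /ek -!scalemxAr scalerA mulrC -scalerA; congr (_ *: _).
set Q := ctr (P l').
have hns : (nspan' <= n_max n)%N.
  move: hnspan'; rewrite /n_span; lia.
pose tl (l : 'I_L) := (n l + kappa n l' - (n_max n - nspan'))%N.
have Qz : forall l, calL n nspan' l' l -> Q *m h l = 0.
  move=> l Hl; case: (hP l') => _ H.
  have Hw : forall w : 'cV[R[i]]_(r l'), ctr (h l) *m (P l' *m w) = 0.
    move=> w; exact: (proj1 (H (P l' *m w)) (ex_intro _ w erefl) l Hl).
  have E0 : ctr (h l) *m P l' = 0.
    apply/matrixP => i j; have := Hw (delta_mx j 0).
    by rewrite mulmxA -colE => /matrixP/(_ i 0); rewrite !mxE.
  by rewrite /Q -[h l]ctrK -ctr_mul E0 /ctr; apply/matrixP => i j; rewrite !mxE; exact: conjc0.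
have gtE : forall t, gt h n nspan' l' t = \sum_(l | calLbar n nspan' l' l && (n l + kappa n l' == t + (n_max n - nspan'))%N) h l.
  move=> t; rewrite /gt; case: pickP => [l0 /andP[Hb Heq] | Hn].
    rewrite (bigD1 l0) /=; last by rewrite Hb Heq.
    rewrite big1 ?addr0 // => l /andP[/andP[_ Heq'] Hne].
    have Enl : n l = n l0 by move/eqP: Heq; move/eqP: Heq'; lia.
    by move: Hne; rewrite (hn _ _ Enl) eqxx.
  by rewrite big1 // => l Hl; move: (Hn l); rewrite Hl.
have LHS : \sum_(t < nspan'.+1) expj (theta R K k * t%:R) *: gt h n nspan' l' t
    = \sum_(l | calLbar n nspan' l' l) expj (theta R K k * (tl l)%:R) *: h l.
  under eq_bigr do rewrite gtE scaler_sumr.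
  rewrite (exchange_big_dep (calLbar n nspan' l')) /=; last by move=> t l _ /andP[].
  apply: eq_bigr => l Hb.
  have Hb' := Hb; move: Hb'; rewrite /calLbar /calL negbK => /andP[A B].
  have Ht : (tl l < nspan'.+1)%N by rewrite /tl; lia.
  rewrite (big_pred1 (Ordinal Ht)) //= => t /=.
  rewrite A B /=; apply/eqP/eqP => [E|->]; first by apply/val_inj => /=; rewrite /tl; lia.
  by rewrite /= /tl; lia.
have RHS : forall c : 'I_L -> R[i], Q *m \sum_(l < L) c l *: h l
    = Q *m \sum_(l | calLbar n nspan' l' l) c l *: h l.
  move=> c; rewrite (bigID (calLbar n nspan' l')) /= mulmxDr [X in _ + X = _]mulmx_sumr.
  rewrite [X in _ + X = _]big1 ?addr0 // => l Hl.
  by rewrite -scalemxAr Qz ?scaler0 //; move: Hl; rewrite /calLbar negbK.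
rewrite LHS RHS scalemxAr scaler_sumr; congr (_ *m _); apply: eq_bigr => l Hb.
rewrite scalerA expjD; congr (expj _ *: _).
rewrite -mulrDr; congr (_ * _).
move: Hb; rewrite /calLbar /calL negbK => /andP[A B].
have E : (tl l + n_max n = kappa n l' + n l + nspan')%N by rewrite /tl; lia.
have := congr1 (fun x : nat => x%:R : R) E; rewrite !natrD => E'; lra.
Qed.
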